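(* Let $U$ be a nonempty subset of $\mathbb{Q}[[t]]$ and let $\mathbf{g}=(g_i(t))_{i=0}^\infty$ be any sequence of elements of $U$ (repetitions allowed). Then for each $n\ge1$, $$\sum_{k=1}^n\alpha_k(U,\mathbf{g})\ge\sum_{k=1}^n\alpha_k(U),$$ where $\alpha_k(U,\mathbf{g}):=\sum_{j=0}^{k-1}\operatorname{ord}_t(g_k(t)-g_j(t))$. Moreover, given a fixed $N\ge1$, equality holds for all $0\le n\le N$ whenever $(g_i(t))_{i=0}^N$ is the initial part of a $t$-ordering of $U$.
   Context: $\mathbb{Q}[[t]]$ is the ring of formal power series over $\mathbb{Q}$, and $\operatorname{ord}_t(f)$ is the largest $\alpha\in\mathbb{N}$ with $t^\alpha\mid f$, $\operatorname{ord}_t(0)=+\infty$. For nonempty $U\subseteq\mathbb{Q}[[t]]$, a $t$-ordering of $U$ is a sequence $(f_i(t))_{i\ge0}$ of elements of $U$ where $f_0\in U$ is arbitrary and for each $k\ge1$, $f_k$ minimizes $\sum_{j=0}^{k-1}\operatorname{ord}_t(f_k(t)-f_j(t))$ over elements of $U$. The $t$-exponent sequence of $U$ is $\alpha_k(U):=\sum_{j=0}^{k-1}\operatorname{ord}_t(f_k(t)-f_j(t))$ for any $t$-ordering of $U$; this value does not depend on the choice of $t$-ordering. *)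

(* Defs.v *)
From Stdlib Require Import ClassicalEpsilon.
From mathcomp Require Import all_boot all_order all_algebra.
Set Implicit Arguments. Unset Strict Implicit. Unset Printing Implicit Defensive.
Import Order.TTheory GRing.Theory Num.Theory.

(* Formal power series over Q, as coefficient sequences: f = sum_i f i * t^i. *)
Definition pser := nat -> rat.

Definition psub (f g : pser) : pser := fun i => (f i - g i)%R.

Inductive enat := Fin of nat | Inf.

Definition eadd (a b : enat) : enat :=
  match a, b with Fin m, Fin n => Fin (m + n) | _, _ => Inf end.

Definition ele (a b : enat) : Prop :=
  match a, b with
  | _, Inf => True
  | Inf, Fin _ => False
  | Fin m, Fin n => (m <= n)%N
  end.

Definition tdvd (a : nat) (f : pser) : Prop := forall i, (i < a)%N -> f i = 0%R.

Definition ord_t (f : pser) : enat :=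
  match excluded_middle_informative (exists i, f i != 0%R) with
  | left H => Fin (ex_minn H)
  | right _ => Inf
  end.

Definition alpha_seq (g : nat -> pser) (k : nat) : enat :=
  \big[eadd/Fin 0]_(0 <= j < k) ord_t (psub (g k) (g j)).

Definition alpha_cand (g : nat -> pser) (k : nat) (u : pser) : enat :=
  \big[eadd/Fin 0]_(0 <= j < k) ord_t (psub u (g j)).

Definition is_t_ordering (U : pser -> Prop) (f : nat -> pser) : Prop :=
  (forall i, U (f i)) /\
  (forall k, (1 <= k)%N -> forall u, U u -> ele (alpha_seq f k) (alpha_cand f k u)).

Definition sum_alpha (g : nat -> pser) (n : nat) : enat :=
  \big[eadd/Fin 0]_(1 <= k < n.+1) alpha_seq g k.

(* Main.v *)
From HB Require Import structures.
Require Import Defs.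
From mathcomp Require Import all_boot all_order all_algebra.
From mathcomp Require Import zify.
From Stdlib Require Import ClassicalEpsilon.
Import GRing.Theory.
Set Implicit Arguments. Unset Strict Implicit.

Lemma eaddA : associative eadd. Proof. by case=>[a|][b|][c|] //=; rewrite addnA. Qed.
Lemma eaddC : commutative eadd. Proof. by case=>[a|][b|] //=; rewrite addnC. Qed.
Lemma add0e : left_id (Fin 0) eadd. Proof. by case. Qed.
Lemma adde0 e : eadd e (Fin 0) = e. Proof. by rewrite eaddC add0e. Qed.
HB.instance Definition _ := Monoid.isComLaw.Build enat (Fin 0) eadd eaddA eaddC add0e.

Lemma ele_refl e : ele e e. Proof. by case: e => //= ?. Qed.
Lemma ele_trans a b c : ele a b -> ele b c -> ele a c.
Proof. case: a => [a|]; case: b => [b|]; case: c => [c|] //=; lia. Qed.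
Arguments ele_trans {a b c}.
Lemma ele_total a b : ele a b \/ ele b a.
Proof. case: a => [a|]; case: b => [b|] /=; auto; lia. Qed.
Lemma ele_anti a b : ele a b -> ele b a -> a = b.
Proof. case: a => [a|]; case: b => [b|] //= H1 H2; congr Fin; lia. Qed.
Lemma eadd_mono a b c d : ele a b -> ele c d -> ele (eadd a c) (eadd b d).
Proof. case: a => [a|]; case: b => [b|]; case: c => [c|]; case: d => [d|] //=; lia. Qed.
Lemma ele0 e : ele (Fin 0) e. Proof. by case: e. Qed.

Lemma ele_char e1 e2 : (forall d, ele (Fin d) e1 -> ele (Fin d) e2) -> ele e1 e2.
Proof.
case: e1 => [m|] H.
  by apply: H => /=.
case: e2 H => [n|] // H.
have := H n.+1 I => /=; lia.
Qed.

Lemma ord_ge d f : ele (Fin d) (ord_t f) <-> (forall i, (i < d)%N -> f i = 0%R).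
Proof.
rewrite /ord_t; case: excluded_middle_informative => [H|H] /=.
  case: ex_minnP => m Hm Hmin; split.
    move=> Hdm i Hi; apply/eqP; apply: contraT => Hfi.
    have := Hmin i Hfi; lia.
  move=> Hall; rewrite leqNgt; apply/negP => Hmd.
  by move: Hm; rewrite Hall.
split => // _ i _; apply/eqP; apply: contraT => Hfi; exfalso; apply: H; by exists i.
Qed.

Definition v (a b : pser) := ord_t (psub a b).

Lemma v_sym a b : v a b = v b a.
Proof.
have K x y : ele (v x y) (v y x).
  apply: ele_char => d /ord_ge H; apply/ord_ge => i Hi.
  have := H i Hi; rewrite /psub => /eqP; rewrite subr_eq0 => /eqP ->.
  by rewrite subrr.
by apply: ele_anti.
Qed.

Lemma ultra a x y : ele (v a x) (v a y) -> ele (v x a) (v x y).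
Proof.
move=> Hle; apply: ele_char => d Hd.
have Hax : ele (Fin d) (v a x) by rewrite v_sym.
have /ord_ge Hay := ele_trans Hax Hle.
move/ord_ge: Hd => Hxa.
apply/ord_ge => i Hi; rewrite /psub.
have := Hxa i Hi; have := Hay i Hi; rewrite /psub.
move=> /eqP; rewrite subr_eq0 => /eqP -> /eqP; rewrite subr_eq0 => /eqP ->.
by rewrite subrr.
Qed.

Definition esum (F : pser -> enat) (l : seq pser) : enat :=
  foldr (fun y acc => eadd (F y) acc) (Fin 0) l.

Inductive prm : seq pser -> seq pser -> Prop :=
| pn : prm [::] [::]
| ps x l l' : prm l l' -> prm (x :: l) (x :: l')
| pw x y l : prm (y :: x :: l) (x :: y :: l)
| pt l1 l2 l3 : prm l1 l2 -> prm l2 l3 -> prm l1 l3.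

Lemma prm_refl l : prm l l.
Proof. elim: l => [|x l IH]; [exact: pn | exact: ps]. Qed.

Lemma prm_size l l' : prm l l' -> size l = size l'.
Proof. elim => //= [x l1 l2 _ -> | l1 l2 l3 _ -> _ ->] //. Qed.

Fixpoint Pall (P : pser -> Prop) (l : seq pser) : Prop :=
  match l with [::] => True | x :: r => P x /\ Pall P r end.

Lemma prm_Pall P l l' : prm l l' -> Pall P l -> Pall P l'.
Proof. elim => //= [x l1 l2 _ IH [? ?]|x y l0 [? [? ?]]|l1 l2 l3 _ IH1 _ IH2]; auto. Qed.

Lemma Pall_mono (P Q : pser -> Prop) l : (forall x, P x -> Q x) -> Pall P l -> Pall Q l.
Proof. move=> H; elim: l => //= x l IH [? ?]; auto. Qed.

Lemma esum_prm F l l' : prm l l' -> esum F l = esum F l'.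
Proof.
elim => //= [x l1 l2 _ -> | x y l0 | l1 l2 l3 _ -> _ ->] //.
by rewrite !eaddA (eaddC (F y)).
Qed.

Fixpoint Ptot (l : seq pser) : enat :=
  match l with [::] => Fin 0 | x :: r => eadd (esum (v x) r) (Ptot r) end.

Lemma Ptot_prm l l' : prm l l' -> Ptot l = Ptot l'.
Proof.
elim => //= [x l1 l2 H -> | x y l0 | l1 l2 l3 _ -> _ ->] //.
  by rewrite (esum_prm _ H).
rewrite v_sym.
set a := v x y; set b := esum (v y) l0; set c := esum (v x) l0; set d := Ptot l0.
by rewrite -!eaddA (eaddA b c) (eaddC b c) -(eaddA c b).
Qed.

Lemma maxsel a z T : exists y R, prm (z :: T) (y :: R) /\
  Pall (fun w => ele (v a w) (v a y)) R.
Proof.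
elim: T z => [|w T IH] z.
  by exists z, [::]; split => //; exact: prm_refl.
have [y' [R' [HP HA]]] := IH w.
have [Hzy|Hyz] := ele_total (v a z) (v a y').
  exists y', (z :: R'); split; last by split.
  apply: pt (pw _ _ _); exact: ps.
exists z, (y' :: R'); split; first exact: ps.
split => //; apply: Pall_mono HA => x Hx; exact: ele_trans Hx Hyz.
Qed.

Lemma keylem A : forall T, size T = (size A).+1 ->
  exists x R, prm T (x :: R) /\ ele (esum (v x) A) (esum (v x) R).
Proof.
elim: A => [|a A IH] T.
  case: T => [|x [|? ?]] //= _.
  by exists x, [::]; split; [exact: prm_refl|].
case: T => [|z T0] //= [HS].
have [y [R1 [HP HA]]] := maxsel a z T0.
have HS1 : size R1 = (size A).+1 by have := prm_size HP => /= [[<-]].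
have [x [R' [HP' HE]]] := IH R1 HS1.
exists x, (y :: R'); split.
  apply: pt HP _; apply: pt (pw _ _ _); exact: ps.
rewrite /=; apply: eadd_mono => //.
apply: ultra.
by have /= [] := prm_Pall HP' HA.
Qed.

Fixpoint Lg (g : nat -> pser) n : seq pser :=
  match n with 0 => [:: g 0] | m.+1 => g m.+1 :: Lg g m end.

Lemma Lg_size g n : size (Lg g n) = n.+1.
Proof. by elim: n => //= n ->. Qed.

Lemma Lg_Pall (P : pser -> Prop) g n : (forall i, P (g i)) -> Pall P (Lg g n).
Proof. by move=> H; elim: n => //= [|n ->]; split. Qed.

Lemma bigesum g x n :
  \big[eadd/Fin 0]_(0 <= j < n.+1) ord_t (psub x (g j)) = esum (v x) (Lg g n).
Proof.
elim: n => [|n IH]; first by rewrite big_nat1 /= adde0.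
by rewrite big_nat_recr //= IH eaddC.
Qed.

Lemma sa_rec g n : sum_alpha g n.+1 = eadd (sum_alpha g n) (alpha_seq g n.+1).
Proof. by rewrite /sum_alpha big_nat_recr. Qed.

Lemma sa_Ptot g n : sum_alpha g n = Ptot (Lg g n).
Proof.
elim: n => [|n IH]; first by rewrite /sum_alpha big_geq.
by rewrite sa_rec IH /= /alpha_seq bigesum eaddC.
Qed.

Lemma mainineq U f (Hf : is_t_ordering U f) n : forall T, Pall U T ->
  size T = n.+1 -> ele (sum_alpha f n) (Ptot T).
Proof.
elim: n => [|n IH] T HU HS.
  by rewrite /sum_alpha big_geq //; exact: ele0.
have HS' : size T = (size (Lg f n)).+1 by rewrite Lg_size.
have [x [R [HP HE]]] := keylem HS'.
rewrite (Ptot_prm HP) /= sa_rec eaddC.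
have [Ux UR] : U x /\ Pall U R by have := prm_Pall HP HU.
apply: eadd_mono; last first.
  apply: IH => //; have := prm_size HP; rewrite HS /=; by case.
apply: ele_trans HE.
have := (proj2 Hf) n.+1 isT x Ux.
by rewrite /alpha_cand bigesum.
Qed.

Lemma part1 U f g (Hg : forall i, U (g i)) : is_t_ordering U f ->
  forall n, ele (sum_alpha f n) (sum_alpha g n).
Proof.
move=> Hf n; rewrite (sa_Ptot g n); apply: (mainineq Hf).
  exact: Lg_Pall. exact: Lg_size.
Qed.

Lemma sa_agree f g n : (forall i, (i <= n)%N -> f i = g i) -> sum_alpha f n = sum_alpha g n.
Proof.
move=> H; rewrite /sum_alpha; apply: eq_big_nat => k /andP [_ Hk].
rewrite /alpha_seq; apply: eq_big_nat => j /andP [_ Hj].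
rewrite !H //; lia.
Qed.

Unset Implicit Arguments.
Theorem theorem4p10 (U : pser -> Prop) (HU : exists u, U u)
    (g : nat -> pser) (Hg : forall i, U (g i)) :
  (forall f, is_t_ordering U f ->
     forall n, (1 <= n)%N -> ele (sum_alpha f n) (sum_alpha g n)) /\
  (forall N, (1 <= N)%N ->
     (exists f, is_t_ordering U f /\ forall i, (i <= N)%N -> f i = g i) ->
     forall h, is_t_ordering U h ->
       forall n, (n <= N)%N -> sum_alpha g n = sum_alpha h n).
Proof.
split.
  move=> f Hf n _; exact: (@part1 U f g Hg Hf n).
move=> N _ [f [Hf Hfg]] h Hh n Hn.
rewrite -(@sa_agree f g n); last by move=> i Hi; apply: Hfg; lia.
apply: ele_anti.
  exact: (@part1 U f h (proj1 Hh) Hf n).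
exact: (@part1 U h f (proj1 Hf) Hh n).
Qed.
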